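(* Let $f=a_nX^n+\dots+a_0\in K[X]$, $a_n\neq 0$, be a regular polynomial. Then the number of roots of $f$ in $K^\ast=K\setminus\{0\}$ equals the sum, over all lower edges $S$ of the Newton polygon of $f$, of the number of roots in $K^\ast$ of the lower binomial of $f$ corresponding to $S$.
   Context: $K$ is a field complete with respect to a non-archimedean discrete valuation $v$, normalized by $v(\pi)=1$ for a uniformizer $\pi$ of the valuation ring $A=\{x\in K: v(x)\geq 0\}$; the residue field $\kappa=A/\pi A$ is finite with $q$ elements and characteristic $p$. For $h=\sum_{i=0}^d c_iX^i\in K[X]$, the Newton polygon of $h$ is the convex hull of the points $(i,v(c_i))$ with $c_i\neq 0$. An edge of a polygon in $\mathbb{R}^2$ is a lower edge if it has an inner normal vector with positive second coordinate. $h$ is regular if for every lower edge $S$ of its Newton polygon, with vertices $(s,v(c_s))$ and $(s',v(c_{s'}))$, $s>s'$: (1) $S$ contains exactly two points of the set $\{(i,v(c_i)) : 0\leq i\leq d,\ c_i\neq 0\}$; (2) $p\nmid (s-s')$. In that case the polynomial $c_{s'}X^{s'}+c_sX^s$ is called the lower binomial of $h$ corresponding to $S$. *)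

(* Defs.v *)
From HB Require Import structures.
From mathcomp Require Import all_boot all_order all_algebra.
From Stdlib Require Import ClassicalEpsilon.
Set Implicit Arguments. Unset Strict Implicit. Unset Printing Implicit Defensive.
Import Order.TTheory GRing.Theory Num.Theory.
Local Open Scope ring_scope.

(* A discrete valuation on K is given by v : K -> int, only meaningful on
   nonzero elements (v 0 = +oo by convention; the value v 0 is never used). *)
Definition is_discrete_valuation (K : fieldType) (v : K -> int) (pi : K) : Prop :=
  [/\ (forall x y : K, x != 0 -> y != 0 -> v (x * y) = v x + v y),
      (forall x y : K, x != 0 -> y != 0 -> x + y != 0 -> Num.min (v x) (v y) <= v (x + y)),
      pi != 0 & v pi = 1].

Definition in_valring (K : fieldType) (v : K -> int) (x : K) : Prop :=
  x = 0 \/ 0 <= v x.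

Definition vclose (K : fieldType) (v : K -> int) (x y : K) (M : int) : Prop :=
  x = y \/ M <= v (x - y).

Definition v_complete (K : fieldType) (v : K -> int) : Prop :=
  forall u : nat -> K,
    (forall M : int, exists N : nat, forall m n : nat, (N <= m)%N -> (N <= n)%N ->
        vclose v (u m) (u n) M) ->
    exists l : K, forall M : int, exists N : nat, forall n : nat, (N <= n)%N ->
        vclose v (u n) l M.

(* the residue field A / pi A has exactly q elements: a list of q elements of A
   which are pairwise incongruent mod pi and represent every class. *)
Definition residue_card (K : fieldType) (v : K -> int) (q : nat) : Prop :=
  exists s : seq K, [/\ size s = q, uniq s,
    (forall x, x \in s -> in_valring v x),
    (forall x y, x \in s -> y \in s -> vclose v x y 1 -> x = y) &
    (forall a, in_valring v a -> exists2 x, x \in s & vclose v a x 1)].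

(* the residue field has characteristic p: p prime and p = 0 in A / pi A *)
Definition residue_char (K : fieldType) (v : K -> int) (p : nat) : Prop :=
  prime p /\ vclose v (p%:R : K) 0 1.

Definition local_field_data (K : fieldType) (v : K -> int) (pi : K) (p q : nat) : Prop :=
  [/\ is_discrete_valuation v pi, v_complete v, residue_card v q & residue_char v p].

(* Newton polygon. The point (k, v(c_k)) lies on or above the line through
   (i, v c_i) and (j, v c_j), i < j. *)
Definition on_or_above (K : fieldType) (v : K -> int) (h : {poly K}) (i j k : nat) : bool :=
  (j%:Z - k%:Z) * v h`_i + (k%:Z - i%:Z) * v h`_j <= (j%:Z - i%:Z) * v h`_k.

Definition on_line (K : fieldType) (v : K -> int) (h : {poly K}) (i j k : nat) : bool :=
  (j%:Z - k%:Z) * v h`_i + (k%:Z - i%:Z) * v h`_j == (j%:Z - i%:Z) * v h`_k.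

(* The segment from (i, v c_i) to (j, v c_j), i < j, is a lower edge of the
   Newton polygon of h: both are points of h, every point lies on or above the
   (non-vertical) line through them, and every point on that line lies between
   them (so they are the two vertices of the edge). *)
Definition lower_edge (K : fieldType) (v : K -> int) (h : {poly K}) (i j : nat) : bool :=
  [&& (i < j)%N, h`_i != 0, h`_j != 0 &
   [forall k : 'I_(size h), (h`_k != 0) ==>
      (on_or_above v h i j k && (on_line v h i j k ==> (i <= k <= j)%N))]].

Definition regular (K : fieldType) (v : K -> int) (p : nat) (h : {poly K}) : Prop :=
  forall i j : nat, lower_edge v h i j ->
    (forall k : nat, h`_k != 0 -> on_line v h i j k -> k = i \/ k = j)
    /\ ~~ (p %| (j - i))%N.

Definition lower_binomial (K : fieldType) (h : {poly K}) (i j : nat) : {poly K} :=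
  h`_i *: 'X^i + h`_j *: 'X^j.

Definition is_nroots_Kstar (K : fieldType) (h : {poly K}) (n : nat) : Prop :=
  exists s : seq K, [/\ uniq s, (forall x, (x \in s) = (x != 0) && root h x) & size s = n].

Definition nroots_Kstar (K : fieldType) (h : {poly K}) : nat :=
  epsilon (inhabits 0%N) (is_nroots_Kstar h).

(* Main.v *)
Require Import Defs.
From mathcomp Require Import all_boot all_order all_algebra.
From mathcomp Require Import zify ring lra.
From Stdlib Require Import ClassicalEpsilon Classical.
Set Implicit Arguments. Unset Strict Implicit. Unset Printing Implicit Defensive.
Import Order.TTheory GRing.Theory Num.Theory.
Local Open Scope ring_scope.

Section Val.
Variables (K : fieldType) (v : K -> int) (pi : K).
Hypothesis Hv : is_discrete_valuation v pi.

Lemma vM (x y : K) : x != 0 -> y != 0 -> v (x * y) = v x + v y.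
Proof. by case: Hv => H _ _ _; apply: H. Qed.

Lemma vD (x y : K) : x != 0 -> y != 0 -> x + y != 0 -> Num.min (v x) (v y) <= v (x + y).
Proof. by case: Hv => _ H _ _; apply: H. Qed.

Lemma v1 : v 1 = 0.
Proof. have := vM (oner_neq0 K) (oner_neq0 K); rewrite mulr1; move: (v 1) => a h; lia. Qed.

Lemma vN1 : v (-1) = 0.
Proof.
have h1 : (-1 : K) != 0 by rewrite oppr_eq0 oner_neq0.
have := vM h1 h1; rewrite mulrNN mulr1 v1; move: (v (-1)) => a h; lia.
Qed.

Lemma vN (x : K) : x != 0 -> v (- x) = v x.
Proof.
move=> x0; have h1 : (-1 : K) != 0 by rewrite oppr_eq0 oner_neq0.
by rewrite -mulN1r vM // vN1 add0r.
Qed.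

Lemma vV (x : K) : x != 0 -> v x^-1 = - v x.
Proof.
move=> x0; have xi0 : x^-1 != 0 by rewrite invr_eq0.
have := vM x0 xi0; rewrite mulfV // v1; move: (v x) (v x^-1) => a b h; lia.
Qed.

Lemma vX (x : K) n : x != 0 -> v (x ^+ n) = n%:Z * v x.
Proof.
move=> x0; elim: n => [|n IH]; first by rewrite expr0 v1 mul0r.
rewrite exprS vM ?expf_neq0 // IH; move: (v x) => a; lia.
Qed.

Lemma vdiv (x y : K) : x != 0 -> y != 0 -> v (x / y) = v x - v y.
Proof. by move=> x0 y0; rewrite vM ?invr_eq0 // vV. Qed.

Definition vge (x : K) (M : int) : bool := (x == 0) || (M <= v x).

Lemma vge_neq (x : K) M : x != 0 -> vge x M = (M <= v x).
Proof. by move=> x0; rewrite /vge (negbTE x0). Qed.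

Lemma vge0 M : vge 0 M. Proof. by rewrite /vge eqxx. Qed.

Lemma vge_le (x : K) M M' : M' <= M -> vge x M -> vge x M'.
Proof. by move=> le /orP [h|h]; rewrite /vge ?h // (le_trans le h) orbT. Qed.

Lemma vgeN (x : K) M : vge (- x) M = vge x M.
Proof.
rewrite /vge oppr_eq0; case: (eqVneq x 0) => //= x0; by rewrite vN.
Qed.

Lemma vgeD (x y : K) M : vge x M -> vge y M -> vge (x + y) M.
Proof.
case: (eqVneq x 0) => [->|x0]; first by rewrite add0r.
case: (eqVneq y 0) => [->|y0]; first by rewrite addr0.
rewrite [vge x _]vge_neq // [vge y _]vge_neq // => hx hy.
case: (eqVneq (x + y) 0) => [->|s0]; first exact: vge0.
rewrite vge_neq //.
by apply: le_trans (vD x0 y0 s0); rewrite le_min hx hy.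
Qed.

Lemma vgeB (x y : K) M : vge x M -> vge y M -> vge (x - y) M.
Proof. by move=> hx hy; apply: vgeD => //; rewrite vgeN. Qed.

Lemma vgeM (x y : K) a b : vge x a -> vge y b -> vge (x * y) (a + b).
Proof.
case: (eqVneq x 0) => [->|x0]; first by move=> *; rewrite mul0r vge0.
case: (eqVneq y 0) => [->|y0]; first by move=> *; rewrite mulr0 vge0.
rewrite [vge x _]vge_neq // [vge y _]vge_neq // vge_neq ?mulf_neq0 // vM // => hx hy; exact: lerD.
Qed.

Lemma vge_sum (I : Type) (r : seq I) (P : pred I) (F : I -> K) M :
  (forall i, P i -> vge (F i) M) -> vge (\sum_(i <- r | P i) F i) M.
Proof.
move=> h; elim/big_rec: _ => [|i x Pi hx]; first exact: vge0.
by apply: vgeD => //; apply: h.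
Qed.

Lemma vge_nat n : vge (n%:R : K) 0.
Proof.
elim: n => [|n IH]; first exact: vge0.
rewrite -addn1 natrD; apply: vgeD => //.
by rewrite /vge v1 lexx orbT.
Qed.

Lemma vge_eq0 (x : K) : (forall M, vge x M) -> x = 0.
Proof.
move=> h; move: (h (v x + 1)); rewrite /vge => /orP [/eqP//|].
move: (v x) => a hh; exfalso; lia.
Qed.

Lemma vclose_vge (x y : K) M : vclose v x y M <-> vge (x - y) M.
Proof.
rewrite /vclose /vge subr_eq0; split.
  by case=> [->|h]; [rewrite eqxx | rewrite h orbT].
by case/orP=> [/eqP|]; [left|right].
Qed.

Lemma vstrict (y r : K) : y != 0 -> vge r (v y + 1) -> (y + r != 0) /\ v (y + r) = v y.
Proof.
move=> y0; case: (eqVneq r 0) => [->|r0]; first by rewrite addr0.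
rewrite vge_neq // => hr.
have s0 : y + r != 0.
  apply/negP => /eqP e; have : r = - y by apply/eqP; rewrite -subr_eq0 opprK addrC e.
  move=> er; move: hr; rewrite er vN //; move: (v y) => a; lia.
split => //.
have h1 := vD y0 r0 s0.
have ey : y = (y + r) + (- r) by rewrite addrK.
have nr0 : - r != 0 by rewrite oppr_eq0.
have h2 : Num.min (v (y + r)) (v (-r)) <= v y.
  by rewrite {2}ey; apply: vD => //; rewrite -ey.
rewrite vN // in h2.
move: h1 h2; rewrite !ge_min; move: hr; move: (v y) (v r) (v (y+r)) => a b c; lia.
Qed.

Definition vunit (x : K) : bool := (x != 0) && (v x == 0).

Lemma vunit_vge (x : K) : vunit x -> vge x 0.
Proof. by case/andP=> x0 /eqP e; rewrite /vge e lexx orbT. Qed.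

Lemma vunitD (s t : K) : vunit s -> vge t 1 -> vunit (s + t).
Proof.
case/andP=> s0 /eqP es ht.
have ht1 : vge t (v s + 1) by rewrite es add0r.
have [h1 h2] := vstrict s0 ht1.
by rewrite /vunit h1 h2 es eqxx.
Qed.

Lemma vunitM (s t : K) : vunit s -> vunit t -> vunit (s * t).
Proof.
case/andP=> s0 /eqP es /andP[t0 /eqP et].
by rewrite /vunit mulf_neq0 // vM // es et.
Qed.

Lemma vunitN (s : K) : vunit s -> vunit (- s).
Proof. by case/andP=> s0 /eqP es; rewrite /vunit oppr_eq0 s0 vN // es. Qed.

Lemma vunitV (s : K) : vunit s -> vunit s^-1.
Proof. by case/andP=> s0 /eqP es; rewrite /vunit invr_eq0 s0 vV // es. Qed.

Lemma vge_divu (x s : K) M : vunit s -> vge x M -> vge (x / s) M.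
Proof.
move=> us hx; have := vgeM hx (vunit_vge (vunitV us)); by rewrite addr0.
Qed.

Lemma vge_mulu (x s : K) M : vunit s -> vge x M -> vge (x * s) M.
Proof.
move=> us hx; have := vgeM hx (vunit_vge us); by rewrite addr0.
Qed.

Lemma vunit1 : vunit 1.
Proof. by rewrite /vunit oner_neq0 v1 eqxx. Qed.

Definition one_unit (x : K) : bool := vge (x - 1) 1.

Lemma one_unit_unit (x : K) : one_unit x -> vunit x.
Proof. by move=> h; have := vunitD vunit1 h; rewrite addrC subrK. Qed.

Lemma one_unitM (x y : K) : one_unit x -> one_unit y -> one_unit (x * y).
Proof.
rewrite /one_unit => hx hy.
have -> : x * y - 1 = (x - 1) * (y - 1) + (x - 1) + (y - 1) by ring.
apply: vgeD => //; apply: vgeD => //.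
by apply: vge_le (vgeM hx hy).
Qed.

Lemma one_unitX (x : K) n : one_unit x -> one_unit (x ^+ n).
Proof.
move=> hx; elim: n => [|n IH]; first by rewrite /one_unit expr0 subrr vge0.
by rewrite exprS one_unitM.
Qed.

End Val.

From mathcomp Require Import all_boot all_order all_algebra.
From mathcomp Require Import zify ring lra.
From Stdlib Require Import ClassicalEpsilon Classical.
Set Implicit Arguments. Unset Strict Implicit. Unset Printing Implicit Defensive.
Import Order.TTheory GRing.Theory Num.Theory.
Local Open Scope ring_scope.

Section Hensel.
Variables (K : fieldType) (v : K -> int) (pi : K).
Hypothesis Hv : is_discrete_valuation v pi.
Variables (N : nat) (a : nat -> K).

Definition Gs (u : K) := \sum_(k < N) a k * u ^+ k.
Definition ss := \sum_(k < N) k%:R * a k.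

Hypothesis ha : forall k, vge v (a k) 0.

Lemma Gdiff u1 u2 : one_unit v u1 -> one_unit v u2 ->
  exists D, Gs u1 - Gs u2 = (u1 - u2) * D /\ vge v (D - ss) 1.
Proof.
move=> h1 h2.
exists (\sum_(k < N) a k * \sum_(l < k) u1 ^+ (k.-1 - l) * u2 ^+ l).
split.
  rewrite /Gs -sumrB mulr_sumr; apply: eq_bigr => k _.
  by rewrite -mulrBr subrXX mulrCA.
rewrite /ss -sumrB; apply: (vge_sum Hv) => k _.
have -> : a k * (\sum_(l < k) u1 ^+ (k.-1 - l) * u2 ^+ l) - k%:R * a k =
   a k * (\sum_(l < k) (u1 ^+ (k.-1 - l) * u2 ^+ l - 1)).
  rewrite sumrB sumr_const card_ord mulrBr; congr (_ - _).
  by rewrite mulrC -mulr_natl.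
have hs : vge v (\sum_(l < k) (u1 ^+ (k.-1 - l) * u2 ^+ l - 1)) 1.
  by apply: (vge_sum Hv) => l _; apply: (one_unitM Hv); apply: (one_unitX Hv).
by have := vgeM Hv (ha k) hs; rewrite add0r.
Qed.

Hypothesis hs : vunit v ss.

Lemma D_unit D : vge v (D - ss) 1 -> vunit v D.
Proof. by move=> h; have := vunitD Hv hs h; rewrite addrC subrK. Qed.

Lemma Gunique u1 u2 : one_unit v u1 -> one_unit v u2 -> Gs u1 = Gs u2 -> u1 = u2.
Proof.
move=> h1 h2 e; have [D [eD hD]] := Gdiff h1 h2.
move: eD; rewrite e subrr => /esym /eqP; rewrite mulf_eq0 => /orP [|].
  by rewrite subr_eq0 => /eqP.
by move/eqP=> D0; move: (D_unit hD); rewrite /vunit D0 eqxx.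
Qed.

Hypothesis hG1 : vge v (Gs 1) 1.
Hypothesis Hc : v_complete v.

Fixpoint useq n := if n is n'.+1 then useq n' - Gs (useq n') / ss else 1.

Lemma useq_inv n : one_unit v (useq n) /\ vge v (Gs (useq n)) (n%:Z + 1).
Proof.
elim: n => [|n [IH1 IH2]] /=.
  by split; [rewrite /one_unit subrr vge0 | rewrite add0r].
set u := useq n.
have hd : vge v (- (Gs u / ss)) (n%:Z + 1).
  by rewrite (vgeN Hv); apply: (vge_divu Hv).
have h1 : one_unit v (u - Gs u / ss).
  rewrite /one_unit (_ : _ - 1 = (u - 1) + - (Gs u / ss)); last by ring.
  apply: (vgeD Hv) => //; apply: vge_le hd; lia.
split => //.
have [D [eD hD]] := Gdiff h1 IH1.
have -> : Gs (u - Gs u / ss) = (- (Gs u / ss)) * (D - ss).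
  have -> : Gs (u - Gs u / ss) = Gs u + (u - Gs u / ss - u) * D.
    by rewrite -eD; ring.
  rewrite (_ : u - Gs u / ss - u = - (Gs u / ss)); last by ring.
  have ss0 : ss != 0 by case/andP: hs.
  rewrite mulrBr !mulNr opprK divfK //; ring.
have := vgeM Hv hd hD.
by rewrite (_ : n%:Z + 1 + 1 = n.+1%:Z + 1) //; lia.
Qed.

Lemma useq_step n : vge v (useq n.+1 - useq n) (n%:Z + 1).
Proof.
have [_ h] := useq_inv n.
rewrite /= (_ : _ - _ = - (Gs (useq n) / ss)); last by ring.
by rewrite (vgeN Hv); apply: (vge_divu Hv).
Qed.

Lemma useq_diff n k : vge v (useq (n + k) - useq n) (n%:Z + 1).
Proof.
elim: k => [|k IH]; first by rewrite addn0 subrr vge0.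
rewrite addnS (_ : _ - _ = (useq (n + k).+1 - useq (n + k)) + (useq (n + k) - useq n)); last by ring.
apply: (vgeD Hv) => //; apply: vge_le (useq_step _); lia.
Qed.

Lemma useq_close m n M : (`|M| <= m)%N -> (`|M| <= n)%N -> vge v (useq m - useq n) M.
Proof.
move=> hm hn; case: (leqP m n) => hmn.
  rewrite -(subnKC hmn) -opprB (vgeN Hv); apply: vge_le (useq_diff _ _); lia.
rewrite -(subnKC (ltnW hmn)); apply: vge_le (useq_diff _ _); lia.
Qed.

Lemma hensel_exists : exists u, one_unit v u /\ Gs u = 0.
Proof.
have [l hl] : exists l : K, forall M : int, exists N0 : nat, forall n : nat, (N0 <= n)%N ->
        vclose v (useq n) l M.
  apply: Hc => M; exists `|M|%N => m n hm hn; apply/vclose_vge; exact: useq_close.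
exists l.
have [N1 hN1] := hl 1.
have hl1 : one_unit v l.
  have := hN1 N1 (leqnn _) => /vclose_vge h.
  have [h2 _] := useq_inv N1.
  rewrite /one_unit (_ : l - 1 = (useq N1 - 1) - (useq N1 - l)); last by ring.
  exact: (vgeB Hv).
split => //.
apply: (vge_eq0 (v := v)) => M.
have [N2 hN2] := hl M.
set n := maxn N2 `|M|.
have := hN2 n (leq_maxl _ _) => /vclose_vge h.
have [hu1 hu2] := useq_inv n.
have [D [eD hD]] := Gdiff hu1 hl1.
have hD0 : vge v D 0 by apply: vunit_vge; apply: D_unit.
rewrite (_ : Gs l = Gs (useq n) - (useq n - l) * D); last by rewrite -eD; ring.
apply: (vgeB Hv).
  apply: vge_le hu2; have : (`|M| <= n)%N by apply: leq_maxr. lia.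
by have := vgeM Hv h hD0; rewrite addr0.
Qed.

End Hensel.

From mathcomp Require Import all_boot all_order all_algebra.
From mathcomp Require Import zify ring lra.
From Stdlib Require Import ClassicalEpsilon Classical.
Set Implicit Arguments. Unset Strict Implicit. Unset Printing Implicit Defensive.
Import Order.TTheory GRing.Theory Num.Theory.
Local Open Scope ring_scope.

Section Poly.
Variables (K : fieldType) (v : K -> int) (pi : K).
Hypothesis Hv : is_discrete_valuation v pi.

Lemma Gs_poly (h : {poly K}) N z d u : (size h <= N)%N ->
  Gs N (fun k => h`_k * z ^+ k / d) u = h.[z * u] / d.
Proof.
move=> hN; rewrite (horner_coef_wide _ hN) /Gs mulr_suml; apply: eq_bigr => k _.
by rewrite exprMn; ring.
Qed.

Lemma poly_hensel_exists (h : {poly K}) N z d : (size h <= N)%N -> d != 0 ->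
  v_complete v ->
  (forall k, vge v (h`_k * z ^+ k / d) 0) -> vge v (h.[z] / d) 1 ->
  vunit v (ss N (fun k => h`_k * z ^+ k / d)) ->
  exists u, one_unit v u /\ h.[z * u] = 0.
Proof.
move=> hN d0 Hc ha h1 hs.
have hG1 : vge v (Gs N (fun k => h`_k * z ^+ k / d) 1) 1 by rewrite Gs_poly // mulr1.
have [u [hu e]] := hensel_exists Hv ha hs hG1 Hc.
exists u; split => //; move: e; rewrite Gs_poly // => /eqP.
by rewrite mulf_eq0 invr_eq0 (negbTE d0) orbF => /eqP.
Qed.

Lemma poly_hensel_unique (h : {poly K}) N z d u1 u2 : (size h <= N)%N ->
  (forall k, vge v (h`_k * z ^+ k / d) 0) ->
  vunit v (ss N (fun k => h`_k * z ^+ k / d)) ->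
  one_unit v u1 -> one_unit v u2 -> h.[z * u1] = 0 -> h.[z * u2] = 0 -> u1 = u2.
Proof.
move=> hN ha hs h1 h2 e1 e2.
apply: (Gunique Hv ha hs h1 h2).
by rewrite !Gs_poly // e1 e2.
Qed.

Lemma nat_unit p m : residue_char v p -> ~~ (p %| m)%N -> vunit v (m%:R : K).
Proof.
case=> pp /vclose_vge; rewrite subr0 => hp ndv.
have p0 : (0 < p)%N by apply: prime_gt0.
have [a _ hdv] := Bezoutl m p0.
have : gcdn p m = 1%N by apply/eqP; rewrite -/(coprime p m) prime_coprime.
move=> g1; rewrite g1 in hdv.
have ek : (1 + a * m = p * ((1 + a * m) %/ p))%N.
  by rewrite [RHS]mulnC divnK.
apply/negPn/negP => nu.
have hm1 : vge v (m%:R : K) 1.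
  case: (eqVneq (m%:R : K) 0) => [->|m0]; first exact: vge0.
  have := vge_nat Hv m; rewrite /vge (negbTE m0) /= => h0.
  move: nu; rewrite /vunit m0 /= => hh; move: h0 hh.
  move: (v m%:R) => b; lia.
have e1 : (1 : K) = p%:R * ((1 + a * m) %/ p)%:R - a%:R * m%:R.
  by rewrite -natrM -ek natrD natrM; ring.
have : vge v (1 : K) 1.
  rewrite e1; apply: (vgeB Hv).
    by have := vgeM Hv hp (vge_nat Hv ((1 + a * m) %/ p)); rewrite addr0.
  by have := vgeM Hv (vge_nat Hv a) hm1; rewrite add0r.
by rewrite /vge oner_eq0 (v1 Hv).
Qed.

End Poly.

Section Roots.
Variable K : fieldType.

Lemma roots_list (h : {poly K}) : h != 0 ->
  exists s : seq K, uniq s /\ forall x, (x \in s) = (x != 0) && root h x.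
Proof.
move: {2}(size h) (leqnn (size h)) => n; elim: n h => [|n IH] h hs h0.
  by move: hs; rewrite leqn0 size_poly_eq0 (negbTE h0).
case: (classic (exists x, (x != 0) && root h x)) => [[x /andP[x0 rx]]|nx]; last first.
  exists [::]; split => // y; rewrite in_nil; apply/esym/negP => hy; apply: nx; by exists y.
have [q eq] := factor_theorem _ _ rx.
have q0 : q != 0 by apply/negP => /eqP q0; move: h0; rewrite eq q0 mul0r eqxx.
have sq : (size q <= n)%N.
  move: hs; rewrite eq size_mul ?polyXsubC_eq0 // size_XsubC addn2 /=; rewrite ltnS; exact.
have [s [us hs']] := IH q sq q0.
exists (if x \in s then s else x :: s); split.
  by case: ifP => // xs; rewrite /= xs us.
move=> y; rewrite eq rootM root_XsubC.
case: ifP => xs.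
  rewrite hs'; case: (eqVneq y x) => [->|_]; last by rewrite orbF.
  by move: xs; rewrite hs' => /andP[-> ->].
rewrite in_cons hs'; case: (eqVneq y x) => [->|_]; first by rewrite x0 orbT.
by rewrite orbF.
Qed.

Lemma nroots_eq (h : {poly K}) (s : seq K) : uniq s ->
  (forall x, (x \in s) = (x != 0) && root h x) -> nroots_Kstar h = size s.
Proof.
move=> us hs.
have ex : exists n, is_nroots_Kstar h n by exists (size s), s.
have [s' [us' hs' e]] := epsilon_spec (inhabits 0%N) (is_nroots_Kstar h) ex.
rewrite /nroots_Kstar -e.
apply/esym/perm_size/uniq_perm => // x; by rewrite hs hs'.
Qed.

End Roots.

From mathcomp Require Import all_boot all_order all_algebra.
From mathcomp Require Import zify ring lra.
From Stdlib Require Import ClassicalEpsilon Classical.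
Set Implicit Arguments. Unset Strict Implicit. Unset Printing Implicit Defensive.
Import Order.TTheory GRing.Theory Num.Theory.
Local Open Scope ring_scope.

Lemma line_arith (i j k : nat) (vi vj vk w mu : int) : (i < j)%N ->
  vi + i%:Z * w = mu -> vj + j%:Z * w = mu ->
  ((j%:Z - k%:Z) * vi + (k%:Z - i%:Z) * vj <= (j%:Z - i%:Z) * vk) = (mu <= vk + k%:Z * w) /\
  ((j%:Z - k%:Z) * vi + (k%:Z - i%:Z) * vj == (j%:Z - i%:Z) * vk) = (mu == vk + k%:Z * w).
Proof.
move=> ij ei ej.
have -> : (j%:Z - k%:Z) * vi + (k%:Z - i%:Z) * vj = (j%:Z - i%:Z) * (mu - k%:Z * w).
  have -> : vj = mu - j%:Z * w by rewrite -ej; ring.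
  have -> : vi = mu - i%:Z * w by rewrite -ei; ring.
  ring.
have hp : 0 < j%:Z - i%:Z by rewrite subr_gt0 ltz_nat.
have hle : forall a b : int, ((j%:Z - i%:Z) * a <= (j%:Z - i%:Z) * b) = (a <= b).
  by move=> a b; rewrite ler_pM2l.
split; first by rewrite hle lerBlDr.
by rewrite eq_le !hle -eq_le subr_eq.
Qed.

Lemma min_exists (N : nat) (P : nat -> bool) (F : nat -> int) :
  (exists k, (k < N)%N && P k) ->
  exists k0, [/\ (k0 < N)%N, P k0 & forall k, (k < N)%N -> P k -> F k0 <= F k].
Proof.
elim: N => [|N IH]; first by case.
case=> k /andP[kN Pk].
case: (boolP [exists k : 'I_N, P k]) => [/existsP [k1 Pk1]|nex].
  have [k0 [k0N Pk0 hk0]] := IH (ex_intro _ (val k1) (introT andP (conj (ltn_ord k1) Pk1))).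
  case: (leP (F k0) (F N)) => hN.
    exists k0; split => //; first exact: ltnW.
    move=> k' k'N Pk'; move: k'N; rewrite ltnS leq_eqVlt => /orP[/eqP->|]; first by [].
    by move=> kk; apply: hk0.
  case: (boolP (P N)) => PN.
    exists N; split => // k' k'N Pk'; move: k'N; rewrite ltnS leq_eqVlt => /orP[/eqP->|kk] //.
    by apply: le_trans (ltW hN) (hk0 _ kk Pk').
  exists k0; split => //; first exact: ltnW.
  move=> k' k'N Pk'; move: k'N; rewrite ltnS leq_eqVlt => /orP[/eqP e|kk].
    by move: PN; rewrite -e Pk'.
  by apply: hk0.
exists N; split => //.
  move: kN; rewrite ltnS leq_eqVlt => /orP[/eqP<-//|kN].
  by exfalso; move/negP: nex; apply; apply/existsP; exists (Ordinal kN).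
move=> k' k'N Pk'; move: k'N; rewrite ltnS leq_eqVlt => /orP[/eqP->//|kN'].
by exfalso; move/negP: nex; apply; apply/existsP; exists (Ordinal kN').
Qed.

Section Main.
Variables (K : fieldType) (v : K -> int) (pi : K) (p q : nat).
Hypothesis HK : local_field_data v pi p q.
Variable f : {poly K}.
Hypothesis Hf : f != 0.
Hypothesis Hreg : regular v p f.

Let Hv : is_discrete_valuation v pi. Proof. by case: HK. Qed.
Let Hc : v_complete v. Proof. by case: HK. Qed.
Let Hp : residue_char v p. Proof. by case: HK. Qed.

Definition Pe (i j : nat) (x : K) : bool := v f`_i + i%:Z * v x == v f`_j + j%:Z * v x.

Lemma coef_nz_lt k : f`_k != 0 -> (k < size f)%N.
Proof. by apply: contraR; rewrite -leqNgt => h; rewrite nth_default. Qed.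

Lemma edge_min i j x : lower_edge v f i j -> Pe i j x ->
  forall k, f`_k != 0 ->
  [/\ v f`_i + i%:Z * v x <= v f`_k + k%:Z * v x,
      v f`_i + i%:Z * v x == v f`_k + k%:Z * v x -> (k == i) || (k == j) &
      v f`_i + i%:Z * v x == v f`_k + k%:Z * v x -> (i <= k <= j)%N].
Proof.
move=> le /eqP pe k ck.
have le' := le; case/and4P: le' => ij ci cj /forallP H.
have := H (Ordinal (coef_nz_lt ck)) => /= /implyP /(_ ck) /andP[].
have [h1 h2] := @line_arith i j k (v f`_i) (v f`_j) (v f`_k) (v x) _ ij (erefl _) (esym pe).
rewrite /on_or_above /on_line h1 h2 => -> /implyP hb.
split => // e; have [hr _] := Hreg le.
have : on_line v f i j k by rewrite /on_line h2.
by case/(hr k ck) => ->; rewrite eqxx ?orbT.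
Qed.

Lemma edge_unique i j i' j' x : lower_edge v f i j -> lower_edge v f i' j' ->
  Pe i j x -> Pe i' j' x -> i = i' /\ j = j'.
Proof.
move=> le le' pe pe'.
have le1 := le; have le1' := le'.
case/and4P: le1 => ij ci cj _; case/and4P: le1' => ij' ci' cj' _.
have [a1 _ a3] := edge_min le pe ci'.
have [b1 _ b3] := edge_min le pe cj'.
have [c1 _ c3] := edge_min le' pe' ci.
have [d1 _ d3] := edge_min le' pe' cj.
move: pe pe' => /eqP pe /eqP pe'.
have e : v f`_i + i%:Z * v x = v f`_i' + i'%:Z * v x by apply/eqP; rewrite eq_le a1 c1.
have := a3 (introT eqP e); have := b3 (introT eqP (etrans e pe')).
have := c3 (introT eqP (esym e)); have := d3 (introT eqP (etrans (esym e) pe)).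
move=> /andP[h1 h2] /andP[h3 h4] /andP[h5 h6] /andP[h7 h8].
split; apply/eqP; rewrite eqn_leq; apply/andP; split => //.
Qed.

Lemma root_edge x : x != 0 -> root f x -> exists i j, lower_edge v f i j /\ Pe i j x.
Proof.
move=> x0 rx.
set val := fun k : nat => v f`_k + k%:Z * v x.
have exk : exists k, (k < size f)%N && (f`_k != 0).
  exists (size f).-1; rewrite -lead_coefE lead_coef_eq0 Hf andbT.
  by rewrite prednK // size_poly_gt0.
have [k0 [k0N ck0 hk0]] := min_exists val exk.
set mu := val k0.
have hmu : forall k, f`_k != 0 -> mu <= val k.
  by move=> k ck; apply: hk0 => //; apply: coef_nz_lt.
pose Q := fun k => (f`_k != 0) && (val k == mu).
have exQ : exists k, Q k by exists k0; rewrite /Q ck0 eqxx.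
have ubQ : forall k, Q k -> (k <= size f)%N.
  by move=> k /andP[ck _]; apply: ltnW; apply: coef_nz_lt.
case: (ex_minnP exQ) => i /andP[ci /eqP vi] imin.
case: (ex_maxnP exQ ubQ) => j /andP[cj /eqP vj] jmax.
have inQ : forall k, f`_k != 0 -> val k = mu -> (i <= k <= j)%N.
  move=> k ck vk; rewrite imin ?jmax //; by rewrite /Q ck vk eqxx.
have ij : (i < j)%N.
  rewrite ltnNge; apply/negP => ji.
  have onlyi : forall k, f`_k != 0 -> val k = mu -> k = i.
    move=> k ck vk; have /andP[h1 h2] := inQ k ck vk; apply/eqP; rewrite eqn_leq h1 andbT.
    exact: leq_trans h2 ji.
  move: rx; rewrite /root (horner_coef_wide _ (leqnn _)).
  rewrite (bigD1 (Ordinal (coef_nz_lt ci))) //=.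
  have ti0 : f`_i * x ^+ i != 0 by rewrite mulf_neq0 // expf_neq0.
  have vti : v (f`_i * x ^+ i) = mu by rewrite (vM Hv) ?expf_neq0 // (vX Hv).
  have hr : vge v (\sum_(k < size f | k != Ordinal (coef_nz_lt ci)) f`_k * x ^+ k)
       (mu + 1).
    apply: (vge_sum Hv) => k nk.
    case: (eqVneq f`_k 0) => [->|ck]; first by rewrite mul0r vge0.
    rewrite vge_neq ?mulf_neq0 ?expf_neq0 // (vM Hv) ?expf_neq0 // (vX Hv) //.
    have : val k != mu.
      apply/negP => /eqP vk; have := onlyi k ck vk => ek.
      by move: nk; rewrite -val_eqE /= ek eqxx.
    by move=> nv; rewrite lezD1 lt_neqAle eq_sym nv /= hmu.
  rewrite -vti in hr.
  by have [/negbTE -> _] := vstrict Hv ti0 hr.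
exists i, j; split; last by rewrite /Pe -/(val i) -/(val j) vi vj.
apply/and4P; split => //; apply/forallP => k; apply/implyP => ck.
have [h1 h2] := @line_arith i j k (v f`_i) (v f`_j) (v f`_k) (v x) mu ij vi vj.
rewrite /on_or_above /on_line h1 h2 hmu //=; apply/implyP => /eqP e.
exact: inQ.
Qed.

Lemma sum_split2 (N i j : nat) (F : nat -> K) : (i < N)%N -> (j < N)%N -> i != j ->
  \sum_(k < N) F k = F i + F j + \sum_(k < N | (k != i :> nat) && (k != j :> nat)) F k.
Proof.
move=> iN jN ij.
rewrite (bigD1 (Ordinal iN)) //= (bigD1 (Ordinal jN)) /=; last by rewrite -val_eqE /= eq_sym.
by rewrite addrA.
Qed.

Section Edge.
Variables i j : nat.
Hypothesis Hle : lower_edge v f i j.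

Let ij : (i < j)%N. Proof. by case/and4P: Hle. Qed.
Let ci : f`_i != 0. Proof. by case/and4P: Hle. Qed.
Let cj : f`_j != 0. Proof. by case/and4P: Hle. Qed.
Let iN : (i < size f)%N. Proof. exact: coef_nz_lt. Qed.
Let jN : (j < size f)%N. Proof. exact: coef_nz_lt. Qed.
Let inj : i != j. Proof. by rewrite neq_ltn ij. Qed.

Definition bb := lower_binomial f i j.

Lemma coef_b k : bb`_k = (if k == i then f`_i else 0) + (if k == j then f`_j else 0).
Proof.
by rewrite /bb /lower_binomial coefD !coefZ !coefXn; case: (k == i); case: (k == j);
  rewrite ?mulr1 ?mulr0.
Qed.

Lemma size_b : (size bb <= size f)%N.
Proof.
apply: leq_trans (size_polyD _ _) _; rewrite geq_max; apply/andP; split;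
  (apply: leq_trans (size_scale_leq _ _) _; rewrite size_polyXn //).
Qed.

Lemma b_neq0 : bb != 0.
Proof.
apply/negP => /eqP b0; have := coef_b i; rewrite b0 coef0 eqxx (negbTE inj) addr0.
by move/esym/eqP; rewrite (negbTE ci).
Qed.

Lemma horner_b z : bb.[z] = f`_i * z ^+ i + f`_j * z ^+ j.
Proof. by rewrite /bb /lower_binomial hornerD !hornerZ !hornerXn. Qed.

Definition dd z := f`_i * z ^+ i.
Definition tt z := f`_j * z ^+ j / dd z.
Definition af z k := f`_k * z ^+ k / dd z.
Definition ab z k := bb`_k * z ^+ k / dd z.

Variable z : K.
Hypothesis z0 : z != 0.
Hypothesis Pz : Pe i j z.

Let d0 : dd z != 0. Proof. by rewrite mulf_neq0 // expf_neq0. Qed.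

Lemma af_i : af z i = 1.
Proof. by rewrite /af -/(dd z) divff. Qed.

Lemma af_ge0 k : vge v (af z k) 0.
Proof.
rewrite /af; case: (eqVneq f`_k 0) => [->|ck]; first by rewrite mul0r mul0r vge0.
have [h1 _ _] := edge_min Hle Pz ck.
rewrite vge_neq; last by rewrite mulf_neq0 ?invr_eq0 // mulf_neq0 // expf_neq0.
rewrite (vdiv Hv) ?mulf_neq0 ?expf_neq0 // (vM Hv) ?expf_neq0 // (vX Hv) //.
by rewrite /dd (vM Hv) ?expf_neq0 // (vX Hv) // subr_ge0.
Qed.

Lemma af_ge1 k : k != i -> k != j -> vge v (af z k) 1.
Proof.
move=> ki kj.
rewrite /af; case: (eqVneq f`_k 0) => [->|ck]; first by rewrite mul0r mul0r vge0.
have [h1 h2 _] := edge_min Hle Pz ck.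
rewrite vge_neq; last by rewrite mulf_neq0 ?invr_eq0 // mulf_neq0 // expf_neq0.
rewrite (vdiv Hv) ?mulf_neq0 ?expf_neq0 // (vM Hv) ?expf_neq0 // (vX Hv) //.
rewrite /dd (vM Hv) ?expf_neq0 // (vX Hv) //.
have hne : v f`_i + i%:Z * v z != v f`_k + k%:Z * v z.
  by apply/negP => /h2; rewrite (negbTE ki) (negbTE kj).
by rewrite lerBrDl lezD1 lt_neqAle hne h1.
Qed.

Lemma ab_eq k : ab z k = (if k == i then af z k else 0) + (if k == j then af z k else 0).
Proof.
rewrite /ab /af coef_b mulrDl mulrDl.
case: (eqVneq k i) => [->|ki]; first by rewrite (negbTE inj) !mul0r !addr0.
by case: (eqVneq k j) => [->|kj]; rewrite ?eqxx ?mul0r ?add0r ?addr0.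
Qed.

Lemma ab_ge0 k : vge v (ab z k) 0.
Proof.
rewrite ab_eq; apply: (vgeD Hv); case: ifP => _; rewrite ?vge0 //; exact: af_ge0.
Qed.

Lemma af_j : af z j = tt z. Proof. by []. Qed.

Lemma sf_eq : f.[z] / dd z = 1 + tt z +
   \sum_(k < size f | (k != i :> nat) && (k != j :> nat)) af z k.
Proof.
rewrite (horner_coef_wide _ (leqnn _)) mulr_suml (@sum_split2 (size f) i j (fun k => f`_k * z ^+ k / dd z) iN jN inj).
by have := af_i; rewrite /af => ->.
Qed.

Lemma ssf_eq : ss (size f) (af z) = i%:R + j%:R * tt z +
   \sum_(k < size f | (k != i :> nat) && (k != j :> nat)) k%:R * af z k.
Proof. by rewrite /ss (@sum_split2 (size f) i j (fun k => k%:R * af z k) iN jN inj) af_i mulr1. Qed.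

Lemma sb_eq : bb.[z] / dd z = 1 + tt z.
Proof. by rewrite horner_b mulrDl -/(dd z) divff. Qed.

Lemma ssb_eq : ss (size f) (ab z) = i%:R + j%:R * tt z.
Proof.
rewrite /ss (@sum_split2 (size f) i j (fun k => k%:R * ab z k) iN jN inj) !ab_eq eqxx (negbTE inj).
rewrite eq_sym (negbTE inj) eqxx af_i add0r addr0 mulr1 big1 ?addr0 //.
by move=> k /andP[ki kj]; rewrite ab_eq (negbTE ki) (negbTE kj) addr0 mulr0.
Qed.

Hypothesis Ht : vge v (1 + tt z) 1.

Lemma sunit_core (R : K) : vge v R 1 -> vunit v (i%:R + j%:R * tt z + R).
Proof.
move=> hR.
have e : i%:R + j%:R * tt z + R = - (j - i)%N%:R + (j%:R * (1 + tt z) + R).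
  rewrite (natrB K (ltnW ij)); move: (tt z) => t; ring.
rewrite e.
have hnd : ~~ (p %| (j - i))%N by case: (Hreg Hle).
have hu := nat_unit Hv Hp hnd.
apply: (vunitD Hv); first by apply: (vunitN Hv).
apply: (vgeD Hv) => //.
by have := vgeM Hv (vge_nat Hv j) Ht; rewrite add0r.
Qed.

Lemma hyp_f : [/\ forall k, vge v (af z k) 0, vge v (f.[z] / dd z) 1 &
   vunit v (ss (size f) (af z))].
Proof.
split; first exact: af_ge0.
  rewrite sf_eq; apply: (vgeD Hv) => //; apply: (vge_sum Hv) => k /andP[ki kj].
  exact: af_ge1.
rewrite ssf_eq; apply: sunit_core; apply: (vge_sum Hv) => k /andP[ki kj].
by have := vgeM Hv (vge_nat Hv k) (af_ge1 ki kj); rewrite add0r.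
Qed.

Lemma hyp_b : [/\ forall k, vge v (ab z k) 0, vge v (bb.[z] / dd z) 1 &
   vunit v (ss (size f) (ab z))].
Proof.
split; first exact: ab_ge0.
  by rewrite sb_eq.
by rewrite ssb_eq -[X in vunit v X]addr0; apply: sunit_core; apply: vge0.
Qed.

End Edge.

End Main.

From mathcomp Require Import all_boot all_order all_algebra.
From mathcomp Require Import zify ring lra.
From Stdlib Require Import ClassicalEpsilon Classical.
Set Implicit Arguments. Unset Strict Implicit. Unset Printing Implicit Defensive.
Import Order.TTheory GRing.Theory Num.Theory.
Local Open Scope ring_scope.

Lemma size_le_rel (T : eqType) (A B : seq T) (R : T -> T -> bool) :
  uniq A -> (forall a, a \in A -> exists2 b, b \in B & R a b) ->
  (forall a a' b, a \in A -> a' \in A -> b \in B -> R a b -> R a' b -> a = a') ->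
  (size A <= size B)%N.
Proof.
move=> uA ex un.
pose phi a := nth a B (find (R a) B).
have hphi : forall a, a \in A -> phi a \in B /\ R a (phi a).
  move=> a aA; have [b bB Rab] := ex a aA.
  have hh : has (R a) B by apply/hasP; exists b.
  split; [by apply: mem_nth; rewrite -has_find | exact: nth_find].
rewrite -(size_map phi); apply: uniq_leq_size.
  rewrite map_inj_in_uniq // => a a' aA a'A e.
  have [h1 h2] := hphi a aA; have [h1' h2'] := hphi a' a'A.
  apply: (un a a' (phi a)) => //; by rewrite e.
by move=> b /mapP [a aA ->]; case: (hphi a aA).
Qed.

Section Final.
Variables (K : fieldType) (v : K -> int) (pi : K) (p q : nat).
Hypothesis HK : local_field_data v pi p q.
Variable f : {poly K}.
Hypothesis Hf : f != 0.
Hypothesis Hreg : regular v p f.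

Let Hv : is_discrete_valuation v pi. Proof. by case: HK. Qed.
Let Hc : v_complete v. Proof. by case: HK. Qed.

Lemma one_unit_sym (x y : K) : x != 0 -> y != 0 -> one_unit v (y / x) -> one_unit v (x / y).
Proof.
move=> x0 y0 h.
have hu : vunit v (x / y).
  by have := vunitV Hv (one_unit_unit Hv h); rewrite invf_div.
rewrite /one_unit (_ : x / y - 1 = - (y / x - 1) * (x / y)); last first.
  by field; apply/andP.
have := vgeM Hv (_ : vge v (- (y / x - 1)) 1) (vunit_vge hu).
by rewrite addr0; apply; rewrite (vgeN Hv).
Qed.

Lemma v_rel (x y : K) : x != 0 -> one_unit v (y / x) -> v y = v x.
Proof.
move=> x0 h; have /andP[u0 /eqP vu] := one_unit_unit Hv h.
have y0 : y != 0 by move: u0; rewrite mulf_eq0 negb_or => /andP[].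
by rewrite -(divfK x0 y) (vM Hv) // vu add0r.
Qed.

Lemma div_mul_cancel (x y : K) : x != 0 -> x * (y / x) = y.
Proof. by move=> x0; rewrite mulrC divfK. Qed.

Lemma edge_count i j (Hle : lower_edge v f i j) (S : seq K) : uniq S ->
  (forall x, (x \in S) = (x != 0) && root f x) ->
  count (Pe v f i j) S = nroots_Kstar (lower_binomial f i j).
Proof.
move=> uS hS.
have Hle' := Hle; case/and4P: Hle' => ij ci cj _.
have [T [uT hT]] := roots_list (b_neq0 Hle).
have -> : nroots_Kstar (lower_binomial f i j) = size T by exact: nroots_eq uT hT.
rewrite -size_filter; set A := filter _ S.
have uA : uniq A by apply: filter_uniq.
have hA : forall x, x \in A = Pe v f i j x && ((x != 0) && root f x).
  by move=> x; rewrite mem_filter hS.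
have hTP : forall y, y \in T -> [/\ y != 0, root (bb f i j) y, Pe v f i j y &
     vge v (1 + tt f i j y) 1].
  move=> y; rewrite hT => /andP[y0 ry].
  have e : f`_i * y ^+ i + f`_j * y ^+ j = 0 by rewrite -horner_b; apply/eqP.
  have e' : f`_i * y ^+ i = - (f`_j * y ^+ j) by apply/eqP; rewrite -addr_eq0 e.
  have hP : Pe v f i j y.
    have h1 : v (f`_i * y ^+ i) = v (- (f`_j * y ^+ j)) by rewrite e'.
    rewrite (vN Hv) in h1; last by rewrite mulf_neq0 // expf_neq0.
    rewrite !(vM Hv) ?expf_neq0 // !(vX Hv) // in h1.
    by rewrite /Pe h1.
  split => //.
  have e2 := sb_eq Hle y0; rewrite (eqP ry) mul0r in e2.
  by rewrite -e2 vge0.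
have hAP : forall x, x \in A -> [/\ x != 0, root f x, Pe v f i j x &
     vge v (1 + tt f i j x) 1].
  move=> x; rewrite hA => /andP[Px /andP[x0 rx]]; split => //.
  have := sf_eq Hle x0; move/eqP: rx => ->; rewrite mul0r => /eqP.
  rewrite eq_sym addr_eq0 => /eqP ->; rewrite (vgeN Hv).
  apply: (vge_sum Hv) => k /andP[ki kj]; exact: (af_ge1 HK Hreg Hle x0 Px ki kj).
have Pe_rel : forall x y, x != 0 -> one_unit v (y / x) -> Pe v f i j y = Pe v f i j x.
  by move=> x y x0 h; rewrite /Pe (v_rel x0 h).
apply/eqP; rewrite eqn_leq; apply/andP; split.
  apply: (size_le_rel (R := fun x y => one_unit v (y / x))) => //.
    move=> x xA; have [x0 rx Px Ht] := hAP x xA.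
    have [h1 h2 h3] := hyp_b HK Hreg Hle x0 Px Ht.
    have [u [hu e]] := poly_hensel_exists Hv (size_b Hle) (mulf_neq0 ci (expf_neq0 _ x0)) Hc h1 h2 h3.
    have u0 : u != 0 by case/andP: (one_unit_unit Hv hu).
    exists (x * u); last by rewrite mulrAC divff // mul1r.
    by rewrite hT mulf_neq0 //=; apply/eqP.
  move=> x x' y xA x'A yT r1 r2.
  have [x0 rx Px _] := hAP x xA; have [x'0 rx' Px' _] := hAP x' x'A.
  have [y0 ry Py Ht] := hTP y yT.
  have [g1 g2 g3] := hyp_f HK Hreg Hle y0 Py Ht.
  have o1 := one_unit_sym x0 y0 r1; have o2 := one_unit_sym x'0 y0 r2.
  have := poly_hensel_unique Hv (leqnn _) g1 g3 o1 o2.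
  rewrite !div_mul_cancel //; move/eqP: rx => -> /(_ erefl); move/eqP: rx' => -> /(_ erefl).
  by move=> e; rewrite -(divfK y0 x) e divfK.
apply: (size_le_rel (R := fun y x => one_unit v (y / x))) => //.
  move=> y yT; have [y0 ry Py Ht] := hTP y yT.
  have [h1 h2 h3] := hyp_f HK Hreg Hle y0 Py Ht.
  have [u [hu e]] := poly_hensel_exists Hv (leqnn _) (mulf_neq0 ci (expf_neq0 _ y0)) Hc h1 h2 h3.
  have u0 : u != 0 by case/andP: (one_unit_unit Hv hu).
  have x0 : y * u != 0 by rewrite mulf_neq0.
  have hu' : one_unit v (y * u / y) by rewrite mulrAC divff // mul1r.
  exists (y * u); last by apply: one_unit_sym.
  rewrite hA x0 /=; apply/andP; split; last by apply/eqP.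
  by rewrite (Pe_rel y) // Py.
move=> y y' x yT y'T xA r1 r2.
have [y0 ry Py _] := hTP y yT; have [y'0 ry' Py' _] := hTP y' y'T.
have [x0 rx Px Ht] := hAP x xA.
have [g1 g2 g3] := hyp_b HK Hreg Hle x0 Px Ht.
have := poly_hensel_unique Hv (size_b Hle) g1 g3 r1 r2.
rewrite !div_mul_cancel //; move/eqP: ry => -> /(_ erefl); move/eqP: ry' => -> /(_ erefl).
by move=> e; rewrite -(divfK x0 y) e divfK.
Qed.

End Final.

Unset Implicit Arguments.
From mathcomp Require Import all_boot all_order all_algebra.
Local Open Scope ring_scope.

Theorem theorem4p6 (K : fieldType) (v : K -> int) (pi : K) (p q : nat)
  (HK : local_field_data v pi p q) (f : {poly K}) (Hf : f != 0)
  (Hreg : regular v p f) :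
  nroots_Kstar f =
  (\sum_(e : 'I_(size f) * 'I_(size f) | lower_edge v f e.1 e.2)
      nroots_Kstar (lower_binomial f e.1 e.2))%N.
Proof.
have [S [uS hS]] := roots_list Hf.
rewrite (nroots_eq uS hS).
rewrite (eq_bigr (fun e : 'I_(size f) * 'I_(size f) => count (Pe v f e.1 e.2) S)); last first.
  by move=> e le; rewrite (edge_count HK Hreg le uS hS).
rewrite (eq_bigr (fun e : 'I_(size f) * 'I_(size f) => \sum_(x <- S) (if Pe v f e.1 e.2 x then 1 else 0))%N); last first.
  by move=> e _; rewrite -sum1_count big_mkcond.
rewrite exchange_big /= -sum1_size big_seq [RHS]big_seq.
apply: eq_bigr => x xS.
move: xS; rewrite hS => /andP[x0 rx].
have [i [j [le pe]]] := root_edge HK Hf x0 rx.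
have le' := le; case/and4P: le' => ij ci cj _.
pose e0 : 'I_(size f) * 'I_(size f) := (Ordinal (coef_nz_lt ci), Ordinal (coef_nz_lt cj)).
rewrite (bigD1 e0) //= pe big1 ?addn0 //.
case=> [a b] /= /andP[lab ne]; case: ifP => // pab.
have [ea eb] := edge_unique Hreg le lab pe pab.
move: ne; rewrite /e0 xpair_eqE -!val_eqE /= -ea -eb !eqxx //.
Qed.
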